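(* Let $P$ be an irreducible semi-isotropic transition matrix on $\mathbb T=\mathbb T_q$, let $\mu$ be the associated probability measure on $\Gamma=\mathrm{Aff}(\mathbb T)$, and let $\nu$ be a $\mu$-invariant Radon measure on $\partial^*\mathbb T$. Then for all $k\ge 0$, $r\ge1$ and every $y\in T_{k,r}$, $$\nu\big(\Omega_0(y)\big)=\nu(\Omega_k)/|T_{k,r}|.$$
   Context: Tree notation: $\mathbb T=\mathbb T_q$ ($q\ge2$) is the homogeneous tree of degree $q+1$ with graph metric $d$, a fixed end $\omega$ and a root $o$. Each vertex $x$ has a unique neighbour $x^-$ (its predecessor) on the geodesic ray from $x$ to $\omega$. $\mathrm{hor}(o)=0$, $\mathrm{hor}(x)=\mathrm{hor}(x^-)+1$. Ancestors of $x$: $x,x^-,(x^-)^-,\dots$; $x\curlywedge y$ is the common ancestor of $x,y$ with maximal $\mathrm{hor}$; $\mathrm{up}(x,y)=\mathrm{hor}(x)-\mathrm{hor}(x\curlywedge y)$. $\partial\mathbb T$ is the space of ends, $\partial^*\mathbb T=\partial\mathbb T\setminus\{\omega\}$. For $\xi\in\partial^*\mathbb T$, $x\curlywedge\xi$ is the vertex of the bi-infinite geodesic from $\omega$ to $\xi$ which is an ancestor of $x$ and has maximal $\mathrm{hor}$, and $\mathrm{up}(x,\xi)=\mathrm{hor}(x)-\mathrm{hor}(x\curlywedge\xi)$. A transition matrix $P$ on $\mathbb T$ is semi-isotropic if $p(x,y)$ depends only on $(\mathrm{up}(x,y),\mathrm{up}(y,x))$. Sets: $T_{k,r}(x)=\{y:\mathrm{up}(x,y)=k,\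 \mathrm{up}(y,x)=r\}$, $\Omega_k(x)=\{\eta\in\partial^*\mathbb T:\mathrm{up}(x,\eta)=k\}$; $T_{k,r}=T_{k,r}(o)$, $\Omega_k=\Omega_k(o)$. Group: $\Gamma=\mathrm{Aff}(\mathbb T)$ is the group of all automorphisms of $\mathbb T$ fixing $\omega$ (locally compact, totally disconnected, acting transitively on $\mathbb T$ and on $\partial^*\mathbb T$); $dg$ is left Haar measure normalized so that the stabilizer $\Gamma_o$ of $o$ has measure $1$; $\mu(dg)=p(o,go)\,dg$. For a Radon measure $\nu$ on $\partial^*\mathbb T$, $\mu*\nu(E)=\int_\Gamma\nu(g^{-1}E)\,\mu(dg)$; $\nu$ is $\mu$-invariant if $\mu*\nu=\nu$. *)

(* Defs.v *)
From HB Require Import structures.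
From mathcomp Require Import all_boot all_order all_algebra.
From mathcomp Require Import all_classical all_reals all_analysis.
From mathcomp Require Import zify.
Set Implicit Arguments. Unset Strict Implicit. Unset Printing Implicit Defensive.
Import Order.TTheory GRing.Theory Num.Theory.
Local Open Scope classical_set_scope.
Local Open Scope ring_scope.

(* The homogeneous tree T_q together with a fixed end omega and a root o,
   described through the predecessor map x |-> x^- (the neighbour of x on
   the ray from x to omega): every vertex has exactly q "children" (vertices
   whose predecessor it is), hence degree q+1; any two vertices have a
   common ancestor (connectedness); hor is the horocycle index with
   hor(o) = 0, hor(x) = hor(x^-) + 1 (this also rules out cycles).
   These data determine (T_q, omega, o) up to isomorphism. *)
Record treeq (q : nat) := TreeQ {
  vtx :> pointedType;
  tpred : vtx -> vtx;
  troot : vtx;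
  hor : vtx -> int;
  children : vtx -> seq vtx;
  q_ge2 : (2 <= q)%N;
  hor_root : hor troot = 0;
  hor_pred : forall x, hor x = hor (tpred x) + 1;
  children_uniq : forall x, uniq (children x);
  children_size : forall x, size (children x) = q;
  children_spec : forall x y, (tpred y == x) = (y \in children x);
  tree_connected : forall x y : vtx, exists m n,
      iter m tpred x = iter n tpred y
}.

Section Tree.
Variables (q : nat) (T : treeq q).
Local Notation pr := (@tpred q T).
Local Notation o := (@troot q T).
Local Notation hr := (@hor q T).

Definition anc_pred (x y : T) : pred nat :=
  fun n => `[< exists m, iter n pr x = iter m pr y >].

Lemma anc_ex (x y : T) : exists n, anc_pred x y n.
Proof.
have [m [n e]] := tree_connected x y.
by exists m; apply/asboolP; exists n.
Qed.

(* x /\ y : the common ancestor of x and y with maximal hor *)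
Definition meet (x y : T) : T := iter (ex_minn (anc_ex x y)) pr x.
Definition up (x y : T) : int := hr x - hr (meet x y).

Definition Tkr_at (x : T) (k r : nat) : set T :=
  [set y | up x y = k%:Z /\ up y x = r%:Z].
Definition Tkr (k r : nat) : set T := Tkr_at o k r.

(* ---------- boundary d*T = ends other than omega ----------
   An end xi <> omega is identified with the bi-infinite geodesic from omega
   to xi, i.e. the sequence (xi n)_{n in Z} of its vertices, xi n being the
   one on horocycle n. *)
Definition is_geod (xi : int -> T) :=
  forall n : int, pr (xi (n + 1)) = xi n /\ hr (xi n) = n.

Definition bdry := {xi : int -> T | is_geod xi}.

Definition first_child (x : T) : T := nth x (children x) 0.

Lemma first_childP x : pr (first_child x) = x.
Proof.
apply/eqP; rewrite children_spec /first_child mem_nth //.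
by rewrite children_size; have := q_ge2 T; case: q.
Qed.

Definition geod0 (n : int) : T :=
  match n with
  | Posz m => iter m first_child o
  | Negz m => iter m.+1 pr o
  end.

Lemma hor_iter_pred x m : hr (iter m pr x) = hr x - m%:Z.
Proof.
elim: m => [|m IH] /=; first by rewrite subr0.
have := hor_pred (iter m pr x); rewrite IH; lia.
Qed.

Lemma hor_iter_child x m : hr (iter m first_child x) = hr x + m%:Z.
Proof.
elim: m => [|m IH] /=; first by rewrite addr0.
rewrite hor_pred first_childP IH; lia.
Qed.

Lemma geod0P : is_geod geod0.
Proof.
move=> [m|m]; split.
- have -> : (Posz m + 1) = Posz m.+1 by lia.
  by rewrite /= first_childP.
- by rewrite /= hor_iter_child hor_root add0r.
- case: m => [|m].
    by have -> : (Negz 0 + 1) = Posz 0 by lia.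
  by have -> : (Negz m.+1 + 1) = Negz m by lia.
- rewrite /= -/(iter m.+1 pr o) hor_iter_pred hor_root; lia.
Qed.

Definition bdry0 : bdry := exist _ geod0 geod0P.

HB.instance Definition _ := gen_eqMixin bdry.
HB.instance Definition _ := gen_choiceMixin bdry.
HB.instance Definition _ := isPointed.Build bdry bdry0.

Lemma geod_iter (xi : bdry) m : iter m pr (sval xi 0) = sval xi (- m%:Z).
Proof.
elim: m => [|m IH] //=; rewrite IH.
have -> : - (Posz m) = - Posz m.+1 + 1 by lia.
by have [] := svalP xi (- Posz m.+1).
Qed.

Definition banc_pred (x : T) (xi : bdry) : pred nat :=
  fun n => `[< exists m, iter n pr x = sval xi m >].

Lemma banc_ex x xi : exists n, banc_pred x xi n.
Proof.
have [m [n e]] := tree_connected x (sval xi 0).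
by exists m; apply/asboolP; exists (- n%:Z); rewrite e geod_iter.
Qed.

(* x /\ xi : the vertex of the geodesic from omega to xi which is an
   ancestor of x and has maximal hor *)
Definition bmeet (x : T) (xi : bdry) : T := iter (ex_minn (banc_ex x xi)) pr x.
Definition bup (x : T) (xi : bdry) : int := hr x - hr (bmeet x xi).

Definition Omega_at (x : T) (k : nat) : set bdry :=
  [set eta | bup x eta = k%:Z].
Definition Omega (k : nat) : set bdry := Omega_at o k.

(* Borel sigma-algebra of d*T: generated by the compact open sets Omega_0(z)
   (which form a countable basis of the topology). *)
Definition bdry_gens : set (set bdry) := range (fun z : T => Omega_at z 0).
Definition bdryM := g_sigma_algebraType bdry_gens.

(* ---------- the affine group Aff(T) ----------
   automorphisms of T fixing omega = bijections commuting with x |-> x^- *)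
Record aff := Aff {
  afn : T -> T;
  ainv : T -> T;
  afnK : cancel afn ainv;
  ainvK : cancel ainv afn;
  afn_pred : forall x, afn (pr x) = pr (afn x)
}.

Definition aff1 : aff := @Aff id id (fun _ => erefl) (fun _ => erefl)
  (fun _ => erefl).

HB.instance Definition _ := gen_eqMixin aff.
HB.instance Definition _ := gen_choiceMixin aff.
HB.instance Definition _ := isPointed.Build aff aff1.

(* Borel sigma-algebra of Aff(T) for the topology of pointwise convergence *)
Definition aff_gens : set (set aff) :=
  [set A | exists x y : T, A = [set g : aff | afn g x = y]].
Definition affM := g_sigma_algebraType aff_gens.

Definition stab_root : set affM := [set g : aff | afn g o = o].

Definition lmul (h : aff) (A : set affM) : set affM :=
  [set g : aff | exists2 a : aff, A a & forall x, afn g x = afn h (afn a x)].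

Lemma iter_aff (g : aff) n x : afn g (iter n pr x) = iter n pr (afn g x).
Proof. by elim: n => //= n <-; rewrite afn_pred. Qed.

Lemma hor_aff (g : aff) x : hr (afn g x) = hr x + hr (afn g o).
Proof.
have [m [n e]] := tree_connected x o.
have e' := congr1 (afn g) e; rewrite !iter_aff in e'.
have h1 := congr1 hr e; have h2 := congr1 hr e'.
rewrite !hor_iter_pred hor_root in h1; rewrite !hor_iter_pred in h2.
lia.
Qed.

Definition act_fun (g : aff) (xi : bdry) : int -> T :=
  fun n => afn g (sval xi (n - hr (afn g o))).

Lemma act_geod g xi : is_geod (act_fun g xi).
Proof.
move=> n; rewrite /act_fun; split.
- have [e _] := svalP xi (n - hr (afn g o)).
  by rewrite -afn_pred -e addrAC.
- have [_ e] := svalP xi (n - hr (afn g o)).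
  by rewrite hor_aff e subrK.
Qed.

Definition act (g : aff) (xi : bdry) : bdry := exist _ (act_fun g xi) (act_geod g xi).

End Tree.

Arguments Tkr {q T}.
Arguments Omega {q T}.
Arguments Omega_at {q T}.
Arguments stab_root {q T}.

Section Measures.
Variables (R : realType) (q : nat) (T : treeq q).

(* (mu * nu)(E) = int_Gamma nu(g^{-1} E) mu(dg), mu(dg) = p(o, g o) dg *)
Definition conv (lam : {measure set (affM T) -> \bar R}) (p : T -> T -> R)
    (nu : {measure set (bdryM T) -> \bar R}) (E : set (bdryM T)) : \bar R :=
  (\int[lam]_(g in [set: affM T])
     (nu (act g @^-1` E) * (p (troot T) (afn g (troot T)))%:E))%E.

Definition is_haar (lam : {measure set (affM T) -> \bar R}) : Prop :=
  (forall (h : aff T) (A : set (affM T)), measurable A ->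
      lam (lmul h A) = lam A) /\ lam stab_root = 1%E.

Definition stochastic (p : T -> T -> R) : Prop :=
  (forall x y, 0 <= p x y) /\
  (forall x, (\esum_(y in [set: T]) (p x y)%:E)%E = 1%E).

Definition irreducible (p : T -> T -> R) : Prop :=
  forall x y : T, exists (n : nat) (f : nat -> T),
    [/\ f 0%N = x, f n = y & forall i, (i < n)%N -> 0 < p (f i) (f i.+1)].

Definition semi_isotropic (p : T -> T -> R) : Prop :=
  exists F : int -> int -> R, forall x y, p x y = F (up x y) (up y x).

(* Radon = locally finite Borel measure (d*T is locally compact, second
   countable, with the Omega_0(z) as a basis of compact open sets) *)
Definition radon (nu : {measure set (bdryM T) -> \bar R}) : Prop :=
  forall xi : bdry T, exists z : T,
    Omega_at z 0 xi /\ (nu (Omega_at z 0) < +oo)%E.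

Definition mu_invariant (lam : {measure set (affM T) -> \bar R})
    (p : T -> T -> R) (nu : {measure set (bdryM T) -> \bar R}) : Prop :=
  forall E : set (bdryM T), measurable E -> conv lam p nu E = nu E.

End Measures.

(* Main.v *)
Require Import Defs.
From HB Require Import structures.
From mathcomp Require Import all_boot all_order all_algebra.
From mathcomp Require Import all_classical all_reals all_analysis.
From mathcomp Require Import finmap zify measurable_realfun.
Set Implicit Arguments. Unset Strict Implicit. Unset Printing Implicit Defensive.
Import Order.TTheory GRing.Theory Num.Theory.
Local Open Scope classical_set_scope.
Local Open Scope ring_scope.


Section TreeFacts.
Variables (q : nat) (T : treeq q).
Local Notation pr := (@tpred q T).
Local Notation o := (@troot q T).
Local Notation hr := (@hor q T).

Lemma ex_minn_eqP (P : pred nat) (e : exists n, P n) k :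
  ex_minn e = k <-> (P k /\ forall n, (n < k)%N -> ~~ P n).
Proof.
case: ex_minnP => n Pn nmin; split.
  move=> <-; split => // m mn; apply/negP => Pm.
  by have := nmin _ Pm; rewrite leqNgt mn.
move=> [Pk kmin]; apply/eqP; rewrite eqn_leq nmin //=.
by rewrite leqNgt; apply/negP => /kmin; rewrite Pn.
Qed.

Lemma ex_minn_ext (P1 P2 : pred nat) (e1 : exists n, P1 n) (e2 : exists n, P2 n) :
  P1 =1 P2 -> ex_minn e1 = ex_minn e2.
Proof.
move=> E; case: (ex_minnP e2) => n Pn nmin.
by apply/ex_minn_eqP; split; [rewrite E | move=> m mn; rewrite E;
  apply/negP => /nmin; rewrite leqNgt mn].
Qed.

Lemma iter_hr_eq (x y : T) n m : iter n pr x = iter m pr y -> hr x - n%:Z = hr y - m%:Z.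
Proof. by move/(congr1 hr); rewrite !hor_iter_pred. Qed.

Lemma up_nat (x y : T) : up x y = (ex_minn (anc_ex x y))%:Z.
Proof. rewrite /up /meet hor_iter_pred; lia. Qed.

Lemma up_aff (g : aff T) x y : up (afn g x) (afn g y) = up x y.
Proof.
rewrite !up_nat; congr Posz; apply: ex_minn_ext => n.
rewrite /anc_pred; apply/asboolP/asboolP => -[m e]; exists m.
  by move: e; rewrite -!iter_aff => /(can_inj (@afnK _ _ g)).
by rewrite -!iter_aff e.
Qed.

Lemma geod_hr (xi : bdry T) n : hr (sval xi n) = n.
Proof. by case: (svalP xi n). Qed.

Lemma geod_iterS (xi : bdry T) n j : iter j pr (sval xi n) = sval xi (n - j%:Z).
Proof.
elim: j => [|j IH] /=; first by rewrite subr0.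
rewrite IH; have [<- _] := svalP xi (n - j.+1%:Z); congr (pr (sval xi _)); lia.
Qed.

Lemma bup_nat x (xi : bdry T) : bup x xi = (ex_minn (banc_ex x xi))%:Z.
Proof. rewrite /bup /bmeet hor_iter_pred; lia. Qed.

Lemma omega0P z (xi : bdry T) : Omega_at z 0 xi <-> sval xi (hr z) = z.
Proof.
rewrite /Omega_at /= bup_nat; split.
  move=> [] /ex_minn_eqP [/asboolP [m /= e] _].
  by rewrite e geod_hr.
move=> e; congr Posz; apply/ex_minn_eqP; split => //.
by apply/asboolP; exists (hr z).
Qed.

Lemma act_omega0 (g : aff T) z :
  act g @^-1` Omega_at z 0 = Omega_at (ainv g z) 0.
Proof.
apply/seteqP; split => xi /=; rewrite /preimage /= !omega0P /= /act_fun;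
  have h := hor_aff g (ainv g z); rewrite ainvK in h.
  have -> : hr (ainv g z) = hr z - hr (afn g o) by lia.
  by move=> e; rewrite -[in RHS]e afnK.
have -> : hr z - hr (afn g o) = hr (ainv g z) by lia.
by move=> ->; rewrite ainvK.
Qed.


Lemma up_eqP x y (k : nat) : up x y = k%:Z <->
  ((exists m, iter k pr x = iter m pr y) /\
   forall n, (n < k)%N -> forall m, iter n pr x <> iter m pr y).
Proof.
rewrite up_nat; split.
  move=> [] /ex_minn_eqP [/asboolP Pk kmin]; split => // n nk m e.
  by have := kmin n nk; move/asboolP; apply; exists m.
move=> [Pk kmin]; congr Posz; apply/ex_minn_eqP; split; first exact/asboolP.
by move=> n nk; apply/asboolP => -[m e]; exact: (kmin n nk m e).
Qed.

Lemma Tkr_spec k r y : Tkr k r y ->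
  [/\ iter r pr y = iter k pr o,
      (forall n, (n < r)%N -> forall m, iter n pr y <> iter m pr o) &
      (forall n, (n < k)%N -> forall m, iter n pr o <> iter m pr y)].
Proof.
move=> [/up_eqP [[m e1] min1] /up_eqP [[m' e2] min2]].
split => //.
have h1 := iter_hr_eq e1; have h2 := iter_hr_eq e2.
rewrite hor_root in h1 h2.
have km : (k <= m')%N.
  by rewrite leqNgt; apply/negP => /min1 /(_ r); rewrite e2.
have rm : (r <= m)%N.
  by rewrite leqNgt; apply/negP => /min2 /(_ k); rewrite e1.
have -> : r = m by lia.
by rewrite e1.
Qed.

Lemma Tkr_intro k r y : iter r pr y = iter k pr o ->
  (forall n, (n < r)%N -> forall m, iter n pr y <> iter m pr o) ->
  (forall n, (n < k)%N -> forall m, iter n pr o <> iter m pr y) -> Tkr k r y.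
Proof.
move=> e m1 m2; split; apply/up_eqP; split => //.
- by exists r.
- by exists k.
Qed.

Lemma Tkr_hr k r y : Tkr k r y -> hr y = r%:Z - k%:Z.
Proof.
by case/Tkr_spec => /iter_hr_eq; rewrite hor_root; lia.
Qed.

Lemma OmegaP k (xi : bdry T) : Omega k xi <->
  (sval xi (- k%:Z) = iter k pr o /\
   forall j, (j < k)%N -> forall m, iter j pr o <> sval xi m).
Proof.
rewrite /Omega /Omega_at /= bup_nat; split.
  move=> [] /ex_minn_eqP [/asboolP [m e] kmin]; split.
    have := geod_hr xi m; rewrite -e hor_iter_pred hor_root => hm.
    by rewrite e; congr (sval xi _); lia.
  by move=> j jk m2 e2; have := kmin j jk; move/asboolP; apply; exists m2.
move=> [e kmin]; congr Posz; apply/ex_minn_eqP; split.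
  by apply/asboolP; exists (- k%:Z).
by move=> n nk; apply/asboolP => -[m e']; exact: (kmin n nk m e').
Qed.

Lemma part1 k r y (xi : bdry T) : (1 <= r)%N -> Tkr k r y ->
  Omega_at y 0 xi -> Omega k xi.
Proof.
move=> r1 Ty /omega0P ey; have hy := Tkr_hr Ty.
case/Tkr_spec: Ty => e mn1 mn2; apply/OmegaP; split.
  by rewrite -e -ey geod_iterS; congr (sval xi _); lia.
move=> j jk m e'.
have hm := geod_hr xi m; rewrite -e' hor_iter_pred hor_root in hm.
case: (ltnP (r + j) k) => [rjk|krj].
  (* xi m is a strict descendant of y: y is an ancestor of o *)
  have : iter (k - r - j)%N pr (sval xi m) = y.
    by rewrite geod_iterS -[in RHS]ey; congr (sval xi _); lia.
  rewrite -e' -iterD => ey2.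
  by apply: (mn1 0%N r1 (k - r - j + j)%N); rewrite /= ey2.
have : iter (r + j - k)%N pr y = sval xi m.
  by rewrite -ey geod_iterS; congr (sval xi _); lia.
move=> e2; apply: (mn1 (r + j - k)%N _ j); first lia.
by rewrite e2 e'.
Qed.

Lemma part2 k r (xi : bdry T) : (1 <= r)%N -> Omega k xi ->
  Tkr k r (sval xi (r%:Z - k%:Z)) /\ Omega_at (sval xi (r%:Z - k%:Z)) 0 xi.
Proof.
move=> r1 /OmegaP [e kmin]; split; last by apply/omega0P; rewrite geod_hr.
apply: Tkr_intro.
- by rewrite geod_iterS -e; congr (sval xi _); lia.
- move=> n nr m e'.
  have hm := iter_hr_eq e'; rewrite geod_hr hor_root in hm.
  apply: (kmin m _ (r%:Z - k%:Z - n%:Z)); first lia.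
  by rewrite -e' geod_iterS.
- move=> n nk m e'; apply: (kmin n nk (r%:Z - k%:Z - m%:Z)).
  by rewrite e' geod_iterS.
Qed.

Lemma part3 k r y y' (xi : bdry T) : Tkr k r y -> Tkr k r y' ->
  Omega_at y 0 xi -> Omega_at y' 0 xi -> y = y'.
Proof.
move=> /Tkr_hr h /Tkr_hr h' /omega0P e /omega0P e'.
by rewrite -e -e' h h'.
Qed.

End TreeFacts.



Section Auts.
Variables (q : nat) (T : treeq q).
Local Notation pr := (@tpred q T).
Local Notation o := (@troot q T).
Local Notation hr := (@hor q T).

Lemma aff_eq (f g : aff T) : afn f =1 afn g -> f = g.
Proof.
case: f g => [f1 f2 a1 a2 a3] [g1 g2 b1 b2 b3] /= e.
have E1 : f1 = g1 by apply: boolp.funext.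
subst g1.
have E2 : f2 = g2.
  by apply: boolp.funext => x; rewrite -{1}(b2 x) a1.
subst g2; congr Aff; apply: boolp.Prop_irrelevance.
Qed.

Definition acomp (f g : aff T) : aff T.
Proof.
refine (@Aff _ T (afn f \o afn g) (ainv g \o ainv f) _ _ _).
- by move=> x /=; rewrite !afnK.
- by move=> x /=; rewrite !ainvK.
- by move=> x /=; rewrite !afn_pred.
Defined.

Definition ainvg (f : aff T) : aff T.
Proof.
refine (@Aff _ T (ainv f) (afn f) (@ainvK _ _ f) (@afnK _ _ f) _).
move=> x; apply: (can_inj (@afnK _ _ f)).
by rewrite afn_pred !ainvK.
Defined.

Lemma child_in (x : T) : x \in children (pr x).
Proof. by rewrite -children_spec. Qed.

Lemma pred_nth (c b : T) i : (i < q)%N -> pr (nth b (children c) i) = c.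
Proof.
move=> iq; apply/eqP; rewrite children_spec mem_nth //.
by rewrite children_size.
Qed.

Lemma index_child (x : T) : (index x (children (pr x)) < q)%N.
Proof. by have := index_mem x (children (pr x)); rewrite child_in children_size. Qed.

Fixpoint tr (a b : T) (d : nat) (x : T) : T :=
  match d with
  | 0%N => b
  | d'.+1 => nth b (children (tr a b d' (pr x))) (index x (children (pr x)))
  end.

Lemma tr_pred a b d x : pr (tr a b d.+1 x) = tr a b d (pr x).
Proof. by rewrite /= pred_nth // index_child. Qed.

Lemma tr_iter a b d x : iter d pr (tr a b d x) = b.
Proof.
elim: d x => [|d IH] x //.
by rewrite iterSr tr_pred IH.
Qed.

Lemma tr_inv a b d x : iter d pr x = a -> tr b a d (tr a b d x) = x.
Proof.
elim: d x => [|d IH] x; first by move=> /= ->.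
rewrite iterSr => e /=.
have -> : pr (nth b (children (tr a b d (pr x))) (index x (children (pr x))))
   = tr a b d (pr x) by rewrite pred_nth // index_child.
rewrite IH // index_uniq ?children_uniq //; last first.
  by rewrite children_size index_child.
by rewrite nth_index // child_in.
Qed.

Definition desc (x u : T) : bool := `[< exists d, iter d pr x = u >].

Lemma desc_dd x u d : iter d pr x = u -> `|hr x - hr u|%N = d.
Proof. move=> <-; rewrite hor_iter_pred; lia. Qed.

Lemma descE x u : desc x u -> iter `|hr x - hr u|%N pr x = u.
Proof. by move/asboolP => [d e]; rewrite (desc_dd e). Qed.

Lemma descI x u d : iter d pr x = u -> desc x u.
Proof. by move=> e; apply/asboolP; exists d. Qed.

Definition sw (u u' x : T) : T :=
  if desc x u then tr u u' `|hr x - hr u|%N x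
  else if desc x u' then tr u' u `|hr x - hr u|%N x else x.


Lemma desc_pred (u x : T) : desc (pr x) u -> desc x u.
Proof. by move/asboolP => [d e]; apply: (@descI _ _ d.+1); rewrite iterSr. Qed.

Lemma desc_predN (u x : T) d : iter d.+1 pr x = u -> desc (pr x) u.
Proof. by rewrite iterSr; apply: descI. Qed.

Lemma tr_desc a b d x : desc (tr a b d x) b.
Proof. exact: (descI (tr_iter a b d x)). Qed.

Lemma hr_tr a b d x : hr (tr a b d x) = hr b + d%:Z.
Proof. by have := hor_iter_pred (tr a b d x) d; rewrite tr_iter; lia. Qed.

End Auts.
Section AutsV.
Variables (q : nat) (T : treeq q).
Local Notation pr := (@tpred q T).
Local Notation hr := (@hor q T).
Variables (u u' : T).
Hypotheses (pu : pr u = pr u') (nu : u != u').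
Lemma hr_uu : hr u = hr u'.
Proof. by rewrite hor_pred pu -hor_pred. Qed.

Lemma desc_excl x : desc x u -> ~~ desc x u'.
Proof.
move=> /descE e; apply/negP => /descE e'.
by move: nu; rewrite -e -e' -hr_uu eqxx.
Qed.

Lemma sw_sym x : sw u u' x = sw u' u x.
Proof.
rewrite /sw -hr_uu; case: ifPn => D; case: ifPn => D' //;
  try by rewrite ?D ?(negbTE D).
by move: (desc_excl D); rewrite D'.
Qed.

End AutsV.

Section Auts2.
Variables (q : nat) (T : treeq q).
Local Notation pr := (@tpred q T).
Local Notation o := (@troot q T).
Local Notation hr := (@hor q T).

Lemma not_desc_pred (u : T) : ~~ desc (pr u) u.
Proof.
apply/negP => /descE; move/(congr1 hr); rewrite hor_iter_pred.
have := hor_pred u; lia.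
Qed.

Lemma sw_pred_case (u u' : T) : pr u = pr u' -> u != u' -> forall x,
  desc x u -> sw u u' (pr x) = pr (sw u u' x).
Proof.
move=> pu nu x D; rewrite /sw D.
move: (descE D); case E: `|hr x - hr u|%N => [|d] /= e.
  subst u.
  have N1 := not_desc_pred x.
  have N2 : ~~ desc (pr x) u'.
    apply/negP => /descE; move/(congr1 hr); rewrite hor_iter_pred -(hr_uu pu).
    have := hor_pred x; lia.
  by rewrite (negbTE N1) (negbTE N2) pu.
have D1 : desc (pr x) u by exact: (desc_predN (d:=d) e).
have e2 : iter d pr (pr x) = u by rewrite -iterSr.
rewrite D1 (desc_dd e2); exact: (esym (tr_pred u u' d x)).
Qed.

Lemma sw_pred (u u' : T) : pr u = pr u' -> u != u' -> forall x,
  sw u u' (pr x) = pr (sw u u' x).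
Proof.
move=> pu nu x; case: (boolP (desc x u)) => D; first exact: sw_pred_case.
case: (boolP (desc x u')) => D'.
  rewrite !(sw_sym pu nu); apply: sw_pred_case => //; by rewrite eq_sym.
have N1 : ~~ desc (pr x) u by apply: contra D; apply: desc_pred.
have N2 : ~~ desc (pr x) u' by apply: contra D'; apply: desc_pred.
by rewrite /sw (negbTE D) (negbTE D') (negbTE N1) (negbTE N2).
Qed.

Lemma sw_inv_case (u u' : T) : pr u = pr u' -> u != u' -> forall x,
  desc x u -> sw u u' (sw u u' x) = x.
Proof.
move=> pu nu x D; rewrite {2}/sw D.
set d := `|hr x - hr u|%N.
have D' := tr_desc u u' d x.
have N : ~~ desc (tr u u' d x) u.
  apply: (desc_excl (esym pu)) => //; by rewrite eq_sym.
rewrite /sw (negbTE N) D' hr_tr -(hr_uu pu).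
have -> : `|(hr u + d%:Z - hr u)%R|%N = d by lia.
exact/tr_inv/descE.
Qed.

Lemma sw_inv (u u' : T) : pr u = pr u' -> u != u' -> forall x,
  sw u u' (sw u u' x) = x.
Proof.
move=> pu nu x; case: (boolP (desc x u)) => D; first exact: sw_inv_case.
case: (boolP (desc x u')) => D'.
  rewrite !(sw_sym pu nu); apply: sw_inv_case => //; by rewrite eq_sym.
by rewrite /sw (negbTE D) (negbTE D') (negbTE D) (negbTE D').
Qed.

Definition swa (u u' : T) (pu : pr u = pr u') (nu : u != u') : aff T :=
  @Aff _ T (sw u u') (sw u u') (sw_inv pu nu) (sw_inv pu nu) (sw_pred pu nu).

Lemma sw_u (u u' : T) : sw u u' u = u'.
Proof. have D : desc u u by apply: (descI (d:=0%N)). by rewrite /sw D subrr. Qed.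

Lemma sw_out (u u' x : T) : ~~ desc x u -> ~~ desc x u' -> sw u u' x = x.
Proof. by move=> D D'; rewrite /sw (negbTE D) (negbTE D'). Qed.

Lemma trans_step j : forall y y' : T, iter j pr y = iter j pr y' ->
  (forall i, (i < j)%N -> forall m, iter i pr y <> iter m pr o) ->
  (forall i, (i < j)%N -> forall m, iter i pr y' <> iter m pr o) ->
  exists g : aff T, afn g o = o /\ afn g y = y'.
Proof.
elim: j => [|j IH] y y' /=.
  by move=> -> _ _; exists (aff1 T).
set u := iter j pr y; set u' := iter j pr y' => pu H H'.
case: (eqVneq u u') => [uu|nu].
  apply: IH => // [i ij|i ij].
  - by apply: H; apply: ltnW.
  - by apply: H'; apply: ltnW.
pose g0 := swa pu nu.
have go : sw u u' o = o.
  apply: sw_out; apply/negP => /asboolP [d e].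
  - by apply: (H j (ltnSn j) d); rewrite e.
  - by apply: (H' j (ltnSn j) d); rewrite e.
have [g [g1 g2]] : exists g : aff T, afn g o = o /\ afn g (sw u u' y) = y'.
  apply: IH.
  - have := iter_aff g0 j y; rewrite /= -/u sw_u => <-; by [].
  - move=> i ij m e.
    apply: (H i (ltnW ij) m).
    have h1 := iter_aff g0 i (sw u u' y); have h2 := iter_aff g0 m o.
    rewrite /= (sw_inv pu nu) in h1; rewrite /= go in h2.
    by rewrite -h1 e h2.
  - by move=> i ij; apply: H'; apply: ltnW.
by exists (acomp g g0); rewrite /= go g1.
Qed.

End Auts2.



Section Count.
Variables (q : nat) (T : treeq q).
Local Notation pr := (@tpred q T).
Local Notation o := (@troot q T).
Local Notation hr := (@hor q T).

Definition descend (a : T) (s : seq nat) : T :=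
  foldl (fun x i => nth x (children x) i) a s.

Lemma descend_surj m (x : T) : exists s, descend (iter m pr x) s = x.
Proof.
elim: m x => [|m IH] x; first by exists [::].
have [s e] := IH (pr x); exists (rcons s (index x (children (pr x)))).
by rewrite iterSr /descend foldl_rcons -/(descend _ _) e nth_index // child_in.
Qed.

Definition enumT (n : nat) : T :=
  match @choice.unpickle (nat * seq nat)%type n with
  | Some (a, s) => descend (iter a pr o) s
  | None => o
  end.

Lemma enumT_surj (x : T) : exists n, enumT n = x.
Proof.
have [m [n e]] := tree_connected x o.
have [s es] := descend_surj m x.
exists (choice.pickle (n, s)); by rewrite /enumT choice.pickleK -e.
Qed.

Lemma gen_meas (x y : T) : measurable [set g : affM T | afn g x = y].
Proof. by apply: sub_sigma_algebra; exists x, y. Qed.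

Lemma meas_dep (y0 : T) (P : T -> T -> Prop) :
  measurable [set g : affM T | P (ainv g y0) (afn g o)].
Proof.
have -> : [set g : affM T | P (ainv g y0) (afn g o)] =
  \bigcup_n \bigcup_m ([set g : affM T | afn g (enumT n) = y0] `&`
     [set g : affM T | afn g o = enumT m] `&` [set _ : affM T | P (enumT n) (enumT m)]).
  apply/seteqP; split => g /=.
    move=> Pg; have [n en] := enumT_surj (ainv g y0).
    have [m em] := enumT_surj (afn g o).
    exists n => //; exists m => //=; split; [split|].
    - by rewrite en ainvK.
    - by rewrite em.
    - by rewrite en em.
  move=> [n _ [m _ /= [[e1 e2] Pnm]]].
  by rewrite -e1 afnK e2.
apply: bigcupT_measurable => n; apply: bigcupT_measurable => m.
apply: measurableI; first apply: measurableI.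
- exact: gen_meas.
- exact: gen_meas.
- case: (pselect (P (enumT n) (enumT m))) => H.
    by have -> : [set _ : affM T | P (enumT n) (enumT m)] = setT
      by apply/seteqP; split.
  by have -> : [set _ : affM T | P (enumT n) (enumT m)] = set0
      by apply/seteqP; split.
Qed.

End Count.

Section Haar.
Variables (R : realType) (q : nat) (T : treeq q).
Local Notation pr := (@tpred q T).
Local Notation o := (@troot q T).
Local Notation hr := (@hor q T).

Lemma acomp_meas (h : aff T) : measurable_fun [set: affM T] (fun g : affM T => (acomp h g : affM T)).
Proof.
have := (@measurability _ _ (affM T) (affM T) setT (fun g : affM T => (acomp h g : affM T)) (@aff_gens _ T)).
move=> H; apply: H => //.
move=> _ [_ [x [y ->]] <-].
have -> : [set: affM T] `&` (fun g : affM T => (acomp h g : affM T)) @^-1` [set g : aff T | afn g x = y]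
  = [set g : affM T | afn g x = ainv h y].
  apply/seteqP; split => g /=.
    by move=> [_ /= <-]; rewrite afnK.
  by move=> ->; rewrite ainvK.
exact: gen_meas.
Qed.

Lemma lmul_pre (h : aff T) (A : set (affM T)) :
  (fun g : affM T => (acomp (ainvg h) g : affM T)) @^-1` A = lmul h A.
Proof.
apply/seteqP; split => g /=.
  by move=> Ag; exists (acomp (ainvg h) g) => // x /=; rewrite ainvK.
move=> [a Aa ea]; suff -> : acomp (ainvg h) g = a by [].
by apply: aff_eq => x /=; rewrite ea afnK.
Qed.

Lemma haar_shift (lam : {measure set (affM T) -> \bar R}) (h : aff T)
  (f : affM T -> \bar R) : is_haar lam ->
  measurable_fun [set: affM T] f -> (forall g, (0 <= f g)%E) ->
  (\int[lam]_(g in [set: affM T]) f (acomp (ainvg h) g) =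
   \int[lam]_(g in [set: affM T]) f g)%E.
Proof.
move=> [hl _] mf f0.
have mL := acomp_meas (ainvg h).
have := @ge0_integral_pushforward _ _ _ _ R _ mL lam setT f measurableT mf (fun _ _ => f0 _).
rewrite preimage_setT => <-.
apply: eq_measure_integral => A mA _.
by transitivity (lam (lmul h A)); [rewrite -lmul_pre | exact: hl].
Qed.

End Haar.



Section Main.
Variables (R : realType) (q : nat) (T : treeq q) (p : T -> T -> R).
Variables (lam : {measure set (affM T) -> \bar R})
    (nu : {measure set (bdryM T) -> \bar R}).
Local Notation pr := (@tpred q T).
Local Notation o := (@troot q T).
Local Notation hr := (@hor q T).

Lemma p_inv (h : aff T) : semi_isotropic p -> afn h o = o -> forall w, p o (afn h w) = p o w.
Proof.
move=> [F hF] ho w; rewrite !hF; congr F; by rewrite -[in LHS]ho up_aff.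
Qed.

Lemma omega_meas z : measurable (Omega_at z 0 : set (bdryM T)).
Proof. by apply: sub_sigma_algebra; exists z. Qed.

Definition FF (z : T) (g : affM T) : \bar R :=
  (nu (Omega_at (ainv g z) 0) * (p o (afn g o))%:E)%E.

Lemma FF_ge0 z g : stochastic p -> (0 <= FF z g)%E.
Proof. by move=> [p0 _]; apply: mule_ge0 => //; rewrite lee_fin. Qed.

Lemma FF_meas z : measurable_fun [set: affM T] (FF z).
Proof.
move=> _ B mB; rewrite setTI.
exact: (meas_dep z (fun z x => B (nu (Omega_at z 0) * (p o x)%:E)%E)).
Qed.

Lemma nu_FF z : mu_invariant lam p nu ->
  nu (Omega_at z 0) = (\int[lam]_(g in [set: affM T]) FF z g)%E.
Proof.
move=> inv; rewrite -(inv _ (omega_meas z)) /conv.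
by apply: eq_integral => g _; rewrite act_omega0.
Qed.

Lemma key (h : aff T) y : stochastic p -> semi_isotropic p -> is_haar lam ->
  mu_invariant lam p nu -> afn h o = o ->
  nu (Omega_at (afn h y) 0) = nu (Omega_at y 0).
Proof.
move=> st si hl inv ho.
rewrite !nu_FF // -(haar_shift h hl (FF_meas y) (fun g => FF_ge0 y g st)).
apply: eq_integral => g _; rewrite /FF /=.
congr (_ * _)%E; congr EFin.
have hio : afn (ainvg h) o = o by rewrite /= -{1}ho afnK.
by rewrite (p_inv (h := ainvg h)).
Qed.

End Main.

Section Fin.
Variables (q : nat) (T : treeq q).
Local Notation pr := (@tpred q T).
Local Notation o := (@troot q T).

Lemma desc_finite (a : T) d : finite_set [set x : T | iter d pr x = a].
Proof.
elim: d => [|d IH].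
  by apply: (sub_finite_set _ (finite_set1 a)) => x /= ->.
apply: (sub_finite_set _ (bigcup_finite IH (fun w _ => finite_seq (children w)))).
move=> x /= e; exists (pr x); first by rewrite /= -iterSr.
exact: child_in.
Qed.

Lemma Tkr_finite k r : finite_set (@Tkr q T k r).
Proof.
apply: (sub_finite_set _ (desc_finite (iter k pr o) r)).
by move=> y /Tkr_spec [].
Qed.

Lemma Tkr_trans k r y y' : @Tkr q T k r y -> Tkr k r y' ->
  exists g : aff T, afn g o = o /\ afn g y = y'.
Proof.
move=> /Tkr_spec [e m1 _] /Tkr_spec [e' m1' _].
by apply: (trans_step (j := r)) => //; rewrite e e'.
Qed.
End Fin.

Lemma sum_cst (R : realType) (I : eqType) (s : seq I) (c : \bar R) : (0 <= c)%E ->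
  (\sum_(i <- s) c = (size s)%:R%:E * c)%E.
Proof.
move=> c0; elim: s => [|i s IH]; first by rewrite big_nil mul0e.
rewrite big_cons IH /= -[X in (X + _)%E]mul1e -ge0_muleDl // -EFinD.
by rewrite -natr1 addrC.
Qed.

Theorem lemma4p2 (R : realType) (q : nat) (T : treeq q) (p : T -> T -> R)
    (lam : {measure set (affM T) -> \bar R})
    (nu : {measure set (bdryM T) -> \bar R}) :
  stochastic p -> irreducible p -> semi_isotropic p ->
  is_haar lam -> radon nu -> mu_invariant lam p nu ->
  forall (k r : nat), (1 <= r)%N ->
  forall y : T, Tkr k r y ->
    nu (Omega_at y 0) =
      (nu (Omega k) * (((#|` fset_set (@Tkr q T k r)|)%fset%:R)^-1)%:E)%E.
Proof.
move=> st _ si hl _ inv k r r1 y Ty.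
have fin := Tkr_finite T k r.
have eqc : forall y', Tkr k r y' -> nu (Omega_at y' 0) = nu (Omega_at y 0).
  move=> y' Ty'; have [g [go gy]] := Tkr_trans Ty Ty'.
  by rewrite -gy (key y st si hl inv go).
have U : Omega k = \bigcup_(i in @Tkr q T k r) Omega_at i 0.
  apply/seteqP; split => xi.
    move=> /(part2 r1) [H1 H2]; by exists (sval xi (r%:Z - k%:Z)).
  by move=> [i Ti Oi]; apply: (part1 r1 Ti Oi).
have S : nu (Omega k) = ((#|` fset_set (@Tkr q T k r)|)%fset%:R%:E * nu (Omega_at y 0))%E.
  rewrite U measure_fin_bigcup //; last first.
  - by move=> i _; exact: omega_meas.
  - apply/trivIsetP => i j Ti Tj ij; apply/seteqP; split => // xi [Oi Oj].
    by move: ij; rewrite (part3 Ti Tj Oi Oj) eqxx.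
  rewrite fsbig_finite //= (eq_big_seq (fun _ => nu (Omega_at y 0))); last first.
    by move=> i; rewrite in_fset_set // in_setE => Ti; exact: eqc.
  by rewrite sum_cst.
have N0 : ((#|` fset_set (@Tkr q T k r)|)%fset%:R != 0 :> R).
  rewrite pnatr_eq0 -lt0n cardfs_gt0; apply/fset0Pn; exists y.
  by rewrite in_fset_set // in_setE.
by rewrite S muleC muleA -EFinM mulVf // mul1e.
Qed.
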